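(* Let $e$ be an environment with binary treatment $T^e$ and covariates $X^e$. Let $\Phi(T,X)$ be a representation, and define the covariate representation $$\Phi(X^e)=\{\Phi(1,X^e),\Phi(0,X^e)\}.$$ Let $\epsilon>0$. Suppose that $\epsilon \le P(T^e=1\mid X^e)\le 1-\epsilon$ with probability 1. Then $\epsilon\le P(T^e=1\mid \Phi(X^e))\le 1-\epsilon$ with probability 1.
   Context: A representation is a (measurable) function $\Phi(T,X)$ of the treatment and the covariates. *)

(* Defs.v *)
From HB Require Import structures.
From mathcomp Require Import all_boot all_order all_algebra.
From mathcomp Require Import all_classical all_reals all_analysis.
Set Implicit Arguments. Unset Strict Implicit. Unset Printing Implicit Defensive.
Import Order.TTheory GRing.Theory Num.Theory.
Local Open Scope classical_set_scope.
Local Open Scope ring_scope.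

(* [g] is a version of the conditional probability P(A | Y), written as a
   measurable function of Y (factorization / Doob-Dynkin form):
   g is measurable, g o Y is P-integrable, and for every measurable B,
   \int_{Y^{-1} B} g(Y) dP = P(Y^{-1} B /\ A). *)
Definition is_cond_prob_version (d d' : measure_display) (R : realType)
  (Omega : measurableType d) (P : probability Omega R)
  (S : measurableType d') (Y : Omega -> S) (A : set Omega) (g : S -> R) : Prop :=
  [/\ measurable_fun setT g,
      P.-integrable setT (fun w => (g (Y w))%:E) &
      forall B : set S, measurable B ->
        (\int[P]_(w in Y @^-1` B) (g (Y w))%:E = P (Y @^-1` B `&` A))%E].

(* Main.v *)
Require Import Defs.
From HB Require Import structures.
From mathcomp Require Import all_boot all_order all_algebra.
From mathcomp Require Import all_classical all_reals all_analysis.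
From mathcomp Require Import measurable_realfun.
Import Order.TTheory GRing.Theory Num.Theory.
Local Open Scope classical_set_scope.
Local Open Scope ring_scope.

Lemma key d (R : realType) (Omega : measurableType d) (P : probability Omega R)
  (C : set Omega) (u v : Omega -> R) : measurable C ->
  P.-integrable setT (fun w => (u w)%:E) -> P.-integrable setT (fun w => (v w)%:E) ->
  (\int[P]_(w in C) (u w)%:E = \int[P]_(w in C) (v w)%:E)%E ->
  {ae P, forall w, C w -> u w < v w} -> P C = 0%E.
Proof.
move=> mC iu iv e hae.
have iuC : P.-integrable C (EFin \o u) by apply: integrableS iu.
have ivC : P.-integrable C (EFin \o v) by apply: integrableS iv.
have mk : measurable_fun C (EFin \o (fun w => v w - u w)).
  apply/measurable_EFinP; apply: measurable_funB.
  - by apply/measurable_EFinP; exact: (measurable_int _ ivC).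
  - by apply/measurable_EFinP; exact: (measurable_int _ iuC).
have i0 : (\int[P]_(w in C) (v w - u w)%:E = 0)%E.
  under eq_integral do rewrite EFinB.
  by rewrite integralB_EFin // e subee //; exact: integrable_fin_num ivC.
have iabs : (\int[P]_(w in C) `|(v w - u w)%:E| = 0)%E.
  rewrite -i0; apply: ae_eq_integral => //.
  - exact: measurableT_comp.
  - apply: filterS hae => w h Cw; rewrite gee0_abs // lee_fin subr_ge0; exact/ltW/h.
have := (ae_eq_integral_abs P mC mk).1 iabs.
move=> hz; have : {ae P, forall w, ~ C w}.
  apply: filterS2 hae hz => w h1 h2 Cw.
  have := h2 Cw; move=> /(congr1 fine) /= /eqP; rewrite subr_eq0 => /eqP E.
  by have := h1 Cw; rewrite E ltxx.
case=> N [mN PN sub]; apply/eqP; rewrite -measure_le0 -PN le_measure // ?inE //.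
by move=> w Cw; apply: sub => /= /(_ Cw).
Qed.

Theorem theorem2 (d dX dZ : measure_display) (R : realType)
  (Omega : measurableType d) (P : probability Omega R)
  (Xs : measurableType dX) (Zs : measurableType dZ)
  (T : Omega -> bool) (X : Omega -> Xs) (Phi : bool -> Xs -> Zs) (eps : R) :
  0 < eps ->
  measurable_fun setT T ->
  measurable_fun setT X ->
  measurable_fun setT (fun p : bool * Xs => Phi p.1 p.2) ->
  forall g : Xs -> R,
    is_cond_prob_version P X (T @^-1` [set true]) g ->
    {ae P, forall w, eps <= g (X w) <= 1 - eps} ->
  forall h : Zs * Zs -> R,
    is_cond_prob_version P (fun w => (Phi true (X w), Phi false (X w)))
      (T @^-1` [set true]) h ->
    {ae P, forall w, eps <= h (Phi true (X w), Phi false (X w)) <= 1 - eps}.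
Proof.
move=> eps0 mT mX mPhi g [gm gi gB] gae h [hm hi hB].
have mPb b : measurable_fun setT (Phi b).
  exact: (measurableT_comp mPhi (pair1_measurable b)).
pose f := fun x => (Phi true x, Phi false x).
have mf : measurable_fun setT f := measurable_fun_pair (mPb true) (mPb false).
pose Y := fun w => f (X w).
have mY : measurable_fun setT Y := measurableT_comp mf mX.
have mt : measurable [set true] by [].
pose B1 := [set z | h z < eps].
have mB1 : measurable B1.
  have := measurable_fun_ltr hm (measurable_cst eps) measurableT (mt : measurable [set true]).
  by rewrite setTI.
pose B2 := [set z | 1 - eps < h z].
have mB2 : measurable B2.
  have := measurable_fun_ltr (measurable_cst (1 - eps)) hm measurableT (mt : measurable [set true]).
  by rewrite setTI.
have mpre B : measurable B -> measurable (Y @^-1` B).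
  by move=> mB; have := mY measurableT B mB; rewrite setTI.
have mfpre B : measurable B -> measurable (f @^-1` B).
  by move=> mB; have := mf measurableT B mB; rewrite setTI.
have E B : measurable B ->
    (\int[P]_(w in Y @^-1` B) (h (Y w))%:E = \int[P]_(w in Y @^-1` B) (g (X w))%:E)%E.
  move=> mB; rewrite (hB B mB).
  by rewrite -(gB (f @^-1` B) (mfpre B mB)).
have P1 : P (Y @^-1` B1) = 0%E.
  apply: (@key _ _ _ P _ (fun w => h (Y w)) (fun w => g (X w)) (mpre _ mB1) hi gi (E _ mB1)).
  apply: filterS gae => w /andP[h1 h2] Cw; exact: lt_le_trans Cw h1.
have P2 : P (Y @^-1` B2) = 0%E.
  apply: (@key _ _ _ P _ (fun w => g (X w)) (fun w => h (Y w)) (mpre _ mB2) gi hi (esym (E _ mB2))).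
  apply: filterS gae => w /andP[h1 h2] Cw; exact: le_lt_trans h2 Cw.
have n1 : {ae P, forall w, ~ (Y @^-1` B1) w}.
  exists (Y @^-1` B1); split => //; first exact: mpre.
  by move=> w /= /contrapT.
have n2 : {ae P, forall w, ~ (Y @^-1` B2) w}.
  exists (Y @^-1` B2); split => //; first exact: mpre.
  by move=> w /= /contrapT.
apply: filterS2 n1 n2 => w h1 h2.
by apply/andP; split; rewrite leNgt; apply/negP.
Qed.
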